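(* Let $n\ge 2$, $PS$ be strictly proper, and let $k$ be an integer with $1\le k\le k_B$. Let $(\bar\beta_\ell,\bar\beta_h)\in\mathbb R^2$ satisfy $\bar\beta_\ell\ge 0$, $\bar\beta_h\ge 0$ and $\bar\beta_h+\frac{P(\ell\mid h)}{P(h\mid h)}\bar\beta_\ell\le 1$. Then $u(\bar\beta_\ell,\bar\beta_h\mid h)\le u(\Sigma^*\mid h)$, with equality only when $(\bar\beta_\ell,\bar\beta_h)=(0,1)$.
   Context: Peer prediction setting with signals $\{\ell,h\}$ and a symmetric prior. $P(s\mid s')$ denotes the probability that another agent has signal $s$ given that one's own signal is $s'$, and $P_{s'}=P(\cdot\mid s')$. Standing assumptions: $P(h\mid h)>P(h\mid\ell)$, $P(h\mid\ell)>0$ and $P(\ell\mid h)>0$. $PS$ is a strictly proper scoring rule on $\{\ell,h\}$. For $\beta'\in\mathbb R$ and $(\beta_\ell,\beta_h)\in\mathbb R^2$, let $q=P(h\mid h)\beta_h+P(\ell\mid h)\beta_\ell$ and define $$f^h(\beta',(\beta_\ell,\beta_h))=\beta'\big[q\,PS(h,P_h)+(1-q)PS(\ell,P_h)\big]+(1-\beta')\big[q\,PS(h,P_\ell)+(1-q)PS(\ell,P_\ell)\big].$$ Define $$u(\bar\beta_\ell,\bar\beta_h\mid h)=\tfrac{n-k}{n-1}f^h(\bar\beta_h,(0,1))+\tfrac{k-1}{n-1}f^h(\bar\beta_h,(\bar\beta_\ell,\bar\beta_h)).$$ This is the interim utility of a signal-$h$ deviator when $k$ deviators all play $(\bar\beta_\ell,\bar\beta_h)$,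 i.e. report $h$ with probability $\bar\beta_\ell$ given signal $\ell$ and with probability $\bar\beta_h$ given signal $h$, and the remaining $n-k$ agents report truthfully. The truthful interim utility is $u(\Sigma^*\mid h)=P(h\mid h)PS(h,P_h)+P(\ell\mid h)PS(\ell,P_h)$. $k_B=\min(k_B^h,k_B^\ell,n)$, where $k_B^h=\lceil (n-1)\mathbb E_{s\sim P_\ell}[PS(s,P_\ell)-PS(s,P_h)]/(P(\ell\mid\ell)(PS(h,P_h)-PS(\ell,P_h)))\rceil$ if $PS(h,P_h)>PS(\ell,P_h)$ and $k_B^h=n$ otherwise; and $k_B^\ell=\lceil (n-1)\mathbb E_{s\sim P_h}[PS(s,P_h)-PS(s,P_\ell)]/(P(h\mid h)(PS(\ell,P_\ell)-PS(h,P_\ell)))\rceil$ if $PS(\ell,P_\ell)>PS(h,P_\ell)$ and $k_B^\ell=n$ otherwise. *)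

(* Defs.v *)
From Stdlib Require Import Reals Lra ZArith.
Open Scope R_scope.

Inductive signal := sl | sh.

(* A distribution on {l,h} is represented by its probability of h, in [0,1].
   A scoring rule PS : signal -> R -> R gives PS(s, p). *)
Definition expected_score (PS : signal -> R -> R) (p q : R) : R :=
  p * PS sh q + (1 - p) * PS sl q.

Definition strictly_proper (PS : signal -> R -> R) : Prop :=
  forall p q : R, 0 <= p <= 1 -> 0 <= q <= 1 -> p <> q ->
    expected_score PS p q < expected_score PS p p.

Definition Zceil (x : R) : Z := (- Int_part (- x))%Z.

(* Model parameters: phh = P(h|h), phl = P(h|l); hence P(l|h) = 1 - phh,
   P(l|l) = 1 - phl, P_h is (the distribution with h-probability) phh and
   P_l is phl. *)

Definition fh (PS : signal -> R -> R) (phh phl : R) (b' bl bh : R) : R :=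
  let q := phh * bh + (1 - phh) * bl in
  b' * (q * PS sh phh + (1 - q) * PS sl phh)
  + (1 - b') * (q * PS sh phl + (1 - q) * PS sl phl).

Definition u_dev (PS : signal -> R -> R) (phh phl : R) (n k : nat) (bl bh : R) : R :=
  (INR n - INR k) / (INR n - 1) * fh PS phh phl bh 0 1
  + (INR k - 1) / (INR n - 1) * fh PS phh phl bh bl bh.

Definition u_truth (PS : signal -> R -> R) (phh : R) : R :=
  phh * PS sh phh + (1 - phh) * PS sl phh.

Definition kB_h (PS : signal -> R -> R) (phh phl : R) (n : nat) : Z :=
  if Rlt_dec (PS sl phh) (PS sh phh) then
    Zceil ((INR n - 1) *
             (phl * (PS sh phl - PS sh phh) + (1 - phl) * (PS sl phl - PS sl phh))
           / ((1 - phl) * (PS sh phh - PS sl phh)))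
  else Z.of_nat n.

Definition kB_l (PS : signal -> R -> R) (phh phl : R) (n : nat) : Z :=
  if Rlt_dec (PS sh phl) (PS sl phl) then
    Zceil ((INR n - 1) *
             (phh * (PS sh phh - PS sh phl) + (1 - phh) * (PS sl phh - PS sl phl))
           / (phh * (PS sl phl - PS sh phl)))
  else Z.of_nat n.

Definition kB (PS : signal -> R -> R) (phh phl : R) (n : nat) : Z :=
  Z.min (kB_h PS phh phl n) (Z.min (kB_l PS phh phl n) (Z.of_nat n)).

(* Main.v *)
Require Import Defs.
From Stdlib Require Import Reals ZArith Lra Lia.
Open Scope R_scope.

Lemma Zceil_lt (z : R) (k : nat) : (Z.of_nat k <= Zceil z)%Z -> INR k - 1 < z.
Proof.
  unfold Zceil, Int_part. intros H.
  destruct (Zfloor_bound (- z)) as [_ H1].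
  assert (Hz : (Zfloor (- z) <= - Z.of_nat k)%Z) by lia.
  apply IZR_le in Hz. rewrite opp_IZR, <- INR_IZR_INZ in Hz. lra.
Qed.

Theorem lemma1 (PS : signal -> R -> R) (phh phl : R) (n k : nat) (bl bh : R) :
  phl < phh -> 0 < phl -> 0 < 1 - phh ->
  (2 <= n)%nat ->
  strictly_proper PS ->
  (1 <= k)%nat -> (Z.of_nat k <= kB PS phh phl n)%Z ->
  0 <= bl -> 0 <= bh -> bh + (1 - phh) / phh * bl <= 1 ->
  u_dev PS phh phl n k bl bh <= u_truth PS phh /\
  (u_dev PS phh phl n k bl bh = u_truth PS phh -> bl = 0 /\ bh = 1).
Proof.
  intros Hab Hb Ha Hn Hsp Hk HkB Hbl Hbh Hc.
  assert (HkBl : (Z.of_nat k <= kB_l PS phh phl n)%Z).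
  { unfold kB in HkB. lia. }
  assert (HN : 1 <= INR n - 1).
  { apply le_INR in Hn. simpl in Hn. lra. }
  assert (HK : 0 <= INR k - 1).
  { apply le_INR in Hk. simpl in Hk. lra. }
  set (Hh := PS sh phh) in *. set (Lh := PS sl phh) in *.
  set (Hl := PS sh phl) in *. set (Ll := PS sl phl) in *.
  set (D := phh * (Hh - Hl) + (1 - phh) * (Lh - Ll)).
  set (X := Lh - Hh). set (Y := Ll - Hl).
  assert (HD : 0 < D).
  { pose proof (Hsp phh phl ltac:(lra) ltac:(lra) ltac:(lra)) as H.
    unfold expected_score in H. fold Hh Lh Hl Ll in H. unfold D. lra. }
  assert (HXY : X < Y).
  { pose proof (Hsp phh phl ltac:(lra) ltac:(lra) ltac:(lra)) as H1.
    pose proof (Hsp phl phh ltac:(lra) ltac:(lra) ltac:(lra)) as H2.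
    unfold expected_score in H1, H2. fold Hh Lh Hl Ll in H1, H2.
    assert (H3 : (phh - phl) * (Y - X) > 0) by (unfold X, Y; nra).
    nra. }
  set (d := phh - (phh * bh + (1 - phh) * bl)).
  assert (Hc' : phh * bh + (1 - phh) * bl <= phh).
  { assert (E : (1 - phh) / phh * bl * phh = (1 - phh) * bl) by (field; lra).
    nra. }
  assert (Hd0 : 0 <= d) by (unfold d; lra).
  assert (Hd1 : d <= phh * (1 - bh)) by (unfold d; nra).
  assert (Hbh1 : bh <= 1) by (unfold d in *; nra).
  set (N := INR n - 1) in *. set (K := INR k - 1) in *.
  set (B := bh * X + (1 - bh) * Y).
  assert (Hid : u_dev PS phh phl n k bl bh - u_truth PS phh
                = (- N * (1 - bh) * D + K * d * B) / N).
  { unfold u_dev, fh, u_truth. fold Hh Lh Hl Ll.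
    replace (INR n - INR k) with (N - K) by (unfold N, K; ring).
    replace (INR k - 1) with K by reflexivity. fold N.
    unfold D, d, B, X, Y. field. lra. }
  assert (HM : exists M, M < N * D /\ K * d * B <= (1 - bh) * M).
  { destruct (Rle_dec Y 0) as [HY | HY].
    - exists 0. split. nra.
      assert (bh * X <= 0) by nra. assert ((1 - bh) * Y <= 0) by nra.
      assert (B <= 0) by (unfold B; lra). assert (K * d * B <= 0).
      { assert (0 <= K * d) by nra. nra. } lra.
    - exists (K * phh * Y). split.
      + unfold kB_l in HkBl. fold Hh Lh Hl Ll in HkBl.
        destruct (Rlt_dec Hl Ll) as [_ | Hn']; [| exfalso; unfold Y in HY; lra].
        apply Zceil_lt in HkBl. fold K in HkBl.
        assert (Hpos : 0 < phh * (Ll - Hl)) by (unfold Y in HY; nra).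
        fold N in HkBl.
        replace (phh * (Hh - Hl) + (1 - phh) * (Lh - Ll)) with D in HkBl by reflexivity.
        apply (Rmult_lt_compat_r (phh * (Ll - Hl))) in HkBl; [|exact Hpos].
        unfold Rdiv in HkBl. rewrite Rmult_assoc, Rinv_l in HkBl by lra.
        unfold Y. lra.
      + assert (bh * X <= bh * Y) by nra. assert (B <= Y) by (unfold B; nra).
        assert (d * B <= d * Y) by nra.
        assert (d * Y <= phh * (1 - bh) * Y) by nra.
        nra. }
  destruct HM as [M [HM1 HM2]].
  assert (HS : - N * (1 - bh) * D + K * d * B <= (1 - bh) * (M - N * D)) by nra.
  split.
  - assert ((- N * (1 - bh) * D + K * d * B) / N <= 0).
    { unfold Rdiv. assert (0 < / N) by (apply Rinv_0_lt_compat; lra).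
      assert ((1 - bh) * (M - N * D) <= 0) by nra.
      assert (- N * (1 - bh) * D + K * d * B <= 0) by lra.
      nra. }
    lra.
  - intros Heq.
    assert (H0 : - N * (1 - bh) * D + K * d * B = 0).
    { assert (E : (- N * (1 - bh) * D + K * d * B) / N = 0) by lra.
      unfold Rdiv in E. apply Rmult_integral in E. destruct E as [E|E]; [exact E|].
      exfalso. assert (0 < / N) by (apply Rinv_0_lt_compat; lra). lra. }
    assert (Hb1 : bh = 1) by nra.
    split; [| exact Hb1].
    subst bh. unfold d in Hd0. nra.
Qed.
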